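(* Let $L$ be an Abelian group, $\mathcal{B}$ an $L$-graded algebra, and $\psi,\psi'$ bilinear forms on $L$ with $\psi(a,b)+\psi(b,a)\equiv\psi'(a,b)+\psi'(b,a)\pmod 2$ for all $a,b\in L$. Let $V\subset\mathcal{B}$ be an $L$-graded subspace. Let $\mathfrak{g}$ be the Lie subalgebra generated by $V$ for the commutator bracket $[-,-]_\psi$ of the $\psi$-twisted multiplication, and $\mathfrak{g}'$ the Lie subalgebra generated by $V$ for the commutator bracket $[-,-]_{\psi'}$ of the $\psi'$-twisted multiplication. Then $\mathfrak{g}=\mathfrak{g}'$ as vector subspaces of $\mathcal{B}$.
   Context: For a bilinear form $\psi$ on $L$, the $\psi$-twisted multiplication on $\mathcal{B}$ is $m^\psi_{a,b}=(-1)^{\psi(a,b)}m_{a,b}$ on homogeneous elements of degrees $a,b$, and $[x,y]_\psi=m^\psi(x,y)-m^\psi(y,x)$. *)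

(* Defs.v *)
From mathcomp Require Import all_boot all_order all_algebra.
Set Implicit Arguments.
Unset Strict Implicit.
Unset Printing Implicit Defensive.
Import GRing.Theory.
Local Open Scope ring_scope.

Section GradedDefs.
Variables (k : fieldType) (B : lmodType k).

Definition is_subspace (W : B -> Prop) : Prop :=
  W 0 /\ forall (c : k) (x y : B), W x -> W y -> W (c *: x + y).

Definition is_bilinear (f : B -> B -> B) : Prop :=
  (forall (c : k) (x y z : B), f (c *: x + y) z = c *: f x z + f y z) /\
  (forall (c : k) (x y z : B), f z (c *: x + y) = c *: f z x + f z y).

Variable L : zmodType.

(* G a is the degree-a homogeneous component; B = (+)_{a in L} G a *)
Definition is_grading (G : L -> B -> Prop) : Prop :=
  [/\ forall a, is_subspace (G a),
      (forall x : B, exists (s : seq L) (f : L -> B),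
          [/\ uniq s, forall a, G a (f a) & x = \sum_(a <- s) f a])
    & forall (s : seq L) (f : L -> B), uniq s -> (forall a, G a (f a)) ->
        \sum_(a <- s) f a = 0 -> forall a, a \in s -> f a = 0].

(* (B, m) is an L-graded algebra with grading G (no associativity assumed) *)
Definition is_graded_algebra (G : L -> B -> Prop) (m : B -> B -> B) : Prop :=
  [/\ is_grading G, is_bilinear m &
      forall a b x y, G a x -> G b y -> G (a + b) (m x y)].

Definition is_graded_subspace (G : L -> B -> Prop) (V : B -> Prop) : Prop :=
  is_subspace V /\
  forall v, V v -> exists (s : seq L) (f : L -> B),
      [/\ uniq s, forall a, G a (f a) /\ V (f a) & v = \sum_(a <- s) f a].

Definition is_bilinear_form (psi : L -> L -> int) : Prop :=
  (forall a b c, psi (a + b) c = psi a c + psi b c) /\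
  (forall a b c, psi a (b + c) = psi a b + psi a c).

Definition is_twisted_mult (G : L -> B -> Prop) (m : B -> B -> B)
    (psi : L -> L -> int) (mpsi : B -> B -> B) : Prop :=
  is_bilinear mpsi /\
  forall a b x y, G a x -> G b y -> mpsi x y = ((-1 : k) ^ (psi a b)) *: m x y.

Definition commutator (mu : B -> B -> B) (x y : B) : B := mu x y - mu y x.

Definition generated_lie_subalg (br : B -> B -> B) (V : B -> Prop) (x : B) : Prop :=
  forall W : B -> Prop, is_subspace W -> (forall v, V v -> W v) ->
    (forall y z, W y -> W z -> W (br y z)) -> W x.

End GradedDefs.

(* Main.v *)
Require Import Defs.
From mathcomp Require Import all_boot all_order all_algebra.
Import GRing.Theory.
Local Open Scope ring_scope.

Section Aux.
Variables (k : fieldType) (B : lmodType k).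

Lemma sgn_sq (z : int) : (-1 : k) ^ z * (-1) ^ z = 1.
Proof. by rewrite -expfzMl mulrNN mulr1 exp1rz. Qed.

Lemma sgn_mod (z w : int) : (z = w %[mod 2])%Z -> (-1 : k) ^ z = (-1) ^ w.
Proof.
move=> H.
have : (2 %| z - w)%Z by rewrite -eqz_mod_dvd; apply/eqP.
move=> /dvdzP [q Hq].
have -> : z = w + 2 * q by rewrite mulrC -Hq addrC subrK.
rewrite expfzDr ?oppr_eq0 ?oner_eq0 // -exprz_exp.
by rewrite (_ : (-1 : k) ^ (2 : int) = (-1) ^+ 2) // sqrrN expr1n exp1rz mulr1.
Qed.

Lemma bil_0l (f : B -> B -> B) : is_bilinear f -> forall z, f 0 z = 0.
Proof.
move=> [H1 _] z; have := H1 1 0 0 z; rewrite !scale1r addr0.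
move=> H; apply: (addrI (f 0 z)); rewrite addr0; exact: esym.
Qed.

Lemma bil_0r (f : B -> B -> B) : is_bilinear f -> forall z, f z 0 = 0.
Proof.
move=> [_ H1] z; have := H1 1 0 0 z; rewrite !scale1r addr0.
move=> H; apply: (addrI (f z 0)); rewrite addr0; exact: esym.
Qed.

Lemma bil_suml (f : B -> B -> B) (r : seq B) z : is_bilinear f ->
  f (\sum_(y <- r) y) z = \sum_(y <- r) f y z.
Proof.
move=> Hf; elim: r => [|y r IH]; first by rewrite !big_nil bil_0l.
by rewrite !big_cons -IH -[y in f (y + _)]scale1r Hf.1 scale1r.
Qed.

Lemma bil_sumr (f : B -> B -> B) (r : seq B) z : is_bilinear f ->
  f z (\sum_(y <- r) y) = \sum_(y <- r) f z y.
Proof.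
move=> Hf; elim: r => [|y r IH]; first by rewrite !big_nil bil_0r.
by rewrite !big_cons -IH -[y in f _ (y + _)]scale1r Hf.2 scale1r.
Qed.

Lemma comm_bil (f : B -> B -> B) : is_bilinear f -> is_bilinear (commutator f).
Proof.
move=> Hf; split=> c x y z; rewrite /commutator Hf.1 Hf.2 scalerBr;
  by rewrite opprD addrACA.
Qed.

Lemma gen_sub (br : B -> B -> B) V W : is_subspace W -> (forall v, V v -> W v) ->
  (forall y z, W y -> W z -> W (br y z)) ->
  forall x, generated_lie_subalg br V x -> W x.
Proof. by move=> H1 H2 H3 x Hx; apply: Hx. Qed.

Lemma gen_subspace (br : B -> B -> B) V : is_subspace (generated_lie_subalg br V).
Proof.
split; first by move=> W [] .
by move=> c x y Hx Hy W HW HV Hb; apply: HW.2; [exact: (Hx W HW HV Hb) | exact: (Hy W HW HV Hb)].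
Qed.

Lemma gen_br (br : B -> B -> B) V y z : generated_lie_subalg br V y ->
  generated_lie_subalg br V z -> generated_lie_subalg br V (br y z).
Proof. by move=> Hy Hz W HW HV Hb; apply: (Hb); [exact: (Hy W HW HV Hb) | exact: (Hz W HW HV Hb)]. Qed.

Lemma gen_V (br : B -> B -> B) (V : B -> Prop) v : V v -> generated_lie_subalg br V v.
Proof. by move=> Hv W HW HV Hb; apply: HV. Qed.

Lemma sub_sum (W : B -> Prop) (r : seq B) (F : B -> B) : is_subspace W ->
  (forall y, y \in r -> W (F y)) -> W (\sum_(y <- r) F y).
Proof.
move=> HW; elim: r => [|y r IH] H; first by rewrite big_nil; exact: HW.1.
rewrite big_cons -[F y]scale1r; apply: HW.2; first by apply: H; rewrite mem_head.
by apply: IH => u Hu; apply: H; rewrite in_cons Hu orbT.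
Qed.

Lemma main_gen (br br' : B -> B -> B) (V hom : B -> Prop) :
  (forall c y, hom y -> hom (c *: y)) ->
  (forall v, V v -> exists r : seq B, (forall y, y \in r -> V y /\ hom y) /\
       v = \sum_(y <- r) y) ->
  is_bilinear br' ->
  (forall y w, hom y -> hom w -> hom (br y w) /\ exists c, br' y w = c *: br y w) ->
  forall x, generated_lie_subalg br' V x -> generated_lie_subalg br V x.
Proof.
move=> Hsc HV Hbil Hbr.
pose P y := generated_lie_subalg br V y /\ hom y.
pose W' x := exists r : seq B, (forall y, y \in r -> P y) /\ x = \sum_(y <- r) y.
have W'sub : is_subspace W'.
  split; first by exists [::]; rewrite big_nil.
  move=> c x y [r1 [H1 ->]] [r2 [H2 ->]].
  exists (map (fun u => c *: u) r1 ++ r2); split.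
    move=> u; rewrite mem_cat => /orP [/mapP [u' Hu' ->] | Hu]; last exact: H2.
    have [G1 G2] := H1 _ Hu'; split; last exact: Hsc.
    by rewrite -[_ *: _]addr0; apply: (gen_subspace br V).2 => //; apply: (gen_subspace br V).1.
  by rewrite big_cat big_map scaler_sumr.
have W'sum : forall (r : seq B) F, (forall y, y \in r -> W' (F y)) -> W' (\sum_(y <- r) F y).
  by move=> r F; apply: sub_sum.
move=> x Hx.
have : W' x.
  apply: (@gen_sub br' V W' W'sub _ _ x Hx).
    move=> v /HV [r [Hr ->]]; exists r; split => // y /Hr [Hy1 Hy2]; split => //.
    exact: gen_V.
  move=> y z [r1 [H1 ->]] [r2 [H2 ->]].
  rewrite bil_suml //; apply: (W'sum) => u1 Hu1.
  rewrite bil_sumr //; apply: (W'sum) => w1 Hw1.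
  have [A1 A2] := H1 _ Hu1; have [B1 B2] := H2 _ Hw1.
  have [Hh [c ->]] := Hbr _ _ A2 B2.
  exists [:: c *: br u1 w1]; rewrite big_seq1; split => // t; rewrite inE => /eqP ->.
  split; last exact: Hsc.
  rewrite -[_ *: _]addr0; apply: (gen_subspace br V).2; last exact: (gen_subspace br V).1.
  exact: gen_br.
move=> [r [Hr ->]]; apply: (@sub_sum _ r id); first exact: gen_subspace.
by move=> y /Hr [].
Qed.

End Aux.

Lemma dir (k : fieldType) (L : zmodType) (B : lmodType k)
    (G : L -> B -> Prop) (m : B -> B -> B)
    (psi psi' : L -> L -> int) (mpsi mpsi' : B -> B -> B) (V : B -> Prop) :
  is_graded_algebra G m ->
  (forall a b, (psi a b + psi b a = psi' a b + psi' b a %[mod 2])%Z) ->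
  is_graded_subspace G V ->
  is_twisted_mult G m psi mpsi -> is_twisted_mult G m psi' mpsi' ->
  forall x : B,
    generated_lie_subalg (commutator mpsi') V x ->
    generated_lie_subalg (commutator mpsi) V x.
Proof.
move=> [[HGsub _ _] _ Hm] Hpar [_ HV] [_ Hmu] [Hbil' Hmu'].
have Gsc : forall a c y, G a y -> G a (c *: y).
  by move=> a c y Hy; rewrite -[_ *: _]addr0; apply: (HGsub a).2 => //; exact: (HGsub a).1.
apply: (@main_gen k B (commutator mpsi) (commutator mpsi') V (fun y => exists a, G a y)).
- by move=> c y [a Ha]; exists a; apply: Gsc.
- move=> v /HV [s [f [_ Hf ->]]]; exists (map f s); split; last by rewrite big_map.
  by move=> y /mapP [a _ ->]; have [H1 H2] := Hf a; split => //; exists a.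
- exact: comm_bil.
move=> y w [a Ha] [b Hb]; rewrite /commutator (Hmu _ _ _ _ Ha Hb) (Hmu _ _ _ _ Hb Ha).
rewrite (Hmu' _ _ _ _ Ha Hb) (Hmu' _ _ _ _ Hb Ha).
split.
  exists (a + b); rewrite -scaleN1r [X in G _ X]addrC; apply: (HGsub _).2.
    by apply: Gsc; rewrite addrC; exact: (Hm _ _ _ _ Hb Ha).
  by apply: Gsc; exact: (Hm _ _ _ _ Ha Hb).
exists ((-1) ^ psi' a b * (-1) ^ psi a b).
have E := @sgn_mod k _ _ (Hpar a b).
rewrite !expfzDr ?oppr_eq0 ?oner_eq0 // in E.
rewrite scalerBr !scalerA -mulrA sgn_sq mulr1 -mulrA E mulrA sgn_sq mul1r //.
Qed.

Theorem lemma10p11 (k : fieldType) (L : zmodType) (B : lmodType k)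
    (G : L -> B -> Prop) (m : B -> B -> B)
    (psi psi' : L -> L -> int) (mpsi mpsi' : B -> B -> B) (V : B -> Prop) :
  is_graded_algebra G m ->
  is_bilinear_form psi -> is_bilinear_form psi' ->
  (forall a b, (psi a b + psi b a = psi' a b + psi' b a %[mod 2])%Z) ->
  is_graded_subspace G V ->
  is_twisted_mult G m psi mpsi -> is_twisted_mult G m psi' mpsi' ->
  forall x : B,
    generated_lie_subalg (commutator mpsi) V x <->
    generated_lie_subalg (commutator mpsi') V x.
Proof.
move=> HA _ _ Hpar HV Ht Ht' x; split.
  exact: (@dir k L B G m psi' psi mpsi' mpsi V HA (fun a b => esym (Hpar a b)) HV Ht' Ht x).
exact: (@dir k L B G m psi psi' mpsi mpsi' V HA Hpar HV Ht Ht' x).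
Qed.
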